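(* Let $X$ be finite, $\mathcal{X}_{lim}\subseteq\mathcal{X}^2$, and let $p$ be an observed random joint choice rule on $\mathcal{X}_{lim}$. The following are equivalent: (1) $p$ has a consumption dependent random utility representation on $\mathcal{X}_{lim}$; (2) there exists a vector $r\ge0$ with $rE=p$; (3) there exists a function $q$, indexed by all $(x,y,A,B)$ with $A,B\in\mathcal{X}$, $(x,y)\in A\times B$, satisfying: (a) $\sum_{A\subseteq A'\subseteq X}\sum_{B\subseteq B'\subseteq X}q(x,y,A',B')=p(x,y,A,B)$ for all $A\times B\in\mathcal{X}_{lim}$ and $(x,y)\in A\times B$; (b) $\sum_{y\in B}q(x,y,A,B)=\sum_{z\in X\setminus B}q(x,z,A,B\cup\{z\})$ for all $A\in\mathcal{X}$, all nonempty $B\subsetneq X$, and all $x\in A$; (c) $q(x,y,A,B)\ge0$ for all $A,B\in\mathcal{X}$, $(x,y)\in A\times B$; (d) $\sum_{x\in A}\sum_{y\in X}q(x,y,A,X)=\sum_{z\in X\setminus A}\sum_{y\in X}q(z,y,A\cup\{z\},X)$ for all $A\in\mathcal{X}$ with $A\ne X$; (e) $\sum_{x\in X}\sum_{y\in X}q(x,y,X,X)=1$.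
   Context: $X$ is finite, $\mathcal{X}$ the nonempty subsets of $X$, $\mathcal{L}(X)$ the linear orders on $X$, $M(\succ,A)$ the $\succ$-maximal element of $A$, $N(x,A)=\{\succ: x\succ y\ \forall y\in A\setminus\{x\}\}$. An observed random joint choice rule on $\mathcal{X}_{lim}$ assigns to each $A\times B\in\mathcal{X}_{lim}$ and $(x,y)\in A\times B$ a number $p(x,y,A,B)\ge0$ with $\sum_{x\in A}\sum_{y\in B}p(x,y,A,B)=1$; view $p$ as a vector indexed by such $(x,y,A,B)$. It has a consumption dependent random utility representation if there exist $\nu\in\Delta(\mathcal{L}(X))$ and a transition function $t:X\times\mathcal{L}(X)\to\Delta(\mathcal{L}(X))$ (with $t_{\succ'}(x,\succ)$ the probability of $\succ'$) such that $p(x,y,A,B)=\sum_{\succ\in N(x,A)}\sum_{\succ'\in N(y,B)}\nu(\succ)t_{\succ'}(x,\succ)$ for all $A\times B\in\mathcal{X}_{lim}$, $(x,y)\in A\times B$. The matrix $E$ has rows indexed by tuples $(\succ,(\succ_z)_{z\in X})\in\mathcal{L}(X)^{|X|+1}$ and columns indexed by $(x,y,A,B)$ with $A\times B\in\mathcal{X}_{lim}$, $(x,y)\in A\times B$; its entry is $1$ if $x=M(\succ,A)$ and $y=M(\succ_x,B)$, and $0$ otherwise. *)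

(* Defs.v *)
From HB Require Import structures.
From mathcomp Require Import all_boot all_order all_algebra.
From mathcomp Require Import reals.
Set Implicit Arguments. Unset Strict Implicit. Unset Printing Implicit Defensive.
Import Order.TTheory GRing.Theory Num.Theory.
Local Open Scope ring_scope.

Section Defs.
Variable X : finType.

(* A (strict) linear order on X, as a boolean relation encoded by a finite
   function on pairs: [rel x y | r (x,y)] means x ≻ y. *)
Definition is_slo (r : {ffun X * X -> bool}) : bool :=
  [&& [forall x, ~~ r (x, x)],
      [forall x, forall y, forall z, r (x, y) ==> r (y, z) ==> r (x, z)] &
      [forall x, forall y, (x != y) ==> r (x, y) || r (y, x)]].

Definition LO := {r : {ffun X * X -> bool} | is_slo r}.

Definition lo_rel (o : LO) (x y : X) : bool := (val o) (x, y).

Definition inN (o : LO) (x : X) (A : {set X}) : bool :=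
  [forall y in A, (y != x) ==> lo_rel o x y].

Definition isMax (o : LO) (A : {set X}) (x : X) : bool :=
  (x \in A) && inN o x A.

(* Rows of E: tuples (o, (o_z)_{z in X}) in L(X)^{|X|+1}. *)
Definition Row := (LO * {ffun X -> LO})%type.

Definition Eentry (R : realType) (w : Row) (x y : X) (A B : {set X}) : R :=
  if isMax w.1 A x && isMax (w.2 x) B y then 1 else 0.

Variable R : realType.
Variable Xlim : {set {set X} * {set X}}.
Variable p : X -> X -> {set X} -> {set X} -> R.

Definition observed_RJCR : Prop :=
  (forall A B, (A, B) \in Xlim -> A != set0 /\ B != set0) /\
  (forall A B x y, (A, B) \in Xlim -> x \in A -> y \in B -> 0 <= p x y A B) /\
  (forall A B, (A, B) \in Xlim -> \sum_(x in A) \sum_(y in B) p x y A B = 1).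

(* (1) consumption dependent random utility representation.
   nu o = ν(o);  t x o o' = t_{o'}(x, o). *)
Definition CDRU_rep : Prop :=
  exists (nu : LO -> R) (t : X -> LO -> LO -> R),
    [/\ (forall o, 0 <= nu o), \sum_o nu o = 1,
        (forall x o o', 0 <= t x o o'),
        (forall x o, \sum_o' t x o o' = 1) &
        (forall A B x y, (A, B) \in Xlim -> x \in A -> y \in B ->
           p x y A B = \sum_(o | inN o x A) \sum_(o' | inN o' y B) nu o * t x o o')].

Definition rE_rep : Prop :=
  exists r : Row -> R,
    (forall w, 0 <= r w) /\
    (forall A B x y, (A, B) \in Xlim -> x \in A -> y \in B ->
       \sum_w r w * Eentry R w x y A B = p x y A B).

Definition q_rep : Prop :=
  exists q : X -> X -> {set X} -> {set X} -> R,
    [/\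
        (forall A B x y, (A, B) \in Xlim -> x \in A -> y \in B ->
           \sum_(A' : {set X} | A \subset A') \sum_(B' : {set X} | B \subset B') q x y A' B'
             = p x y A B),
        (forall A B x, A != set0 -> B != set0 -> B != setT -> x \in A ->
           \sum_(y in B) q x y A B = \sum_(z in ~: B) q x z A (z |: B)),
        (forall A B x y, A != set0 -> B != set0 -> x \in A -> y \in B ->
           0 <= q x y A B),
        (forall A, A != set0 -> A != setT ->
           \sum_(x in A) \sum_(y : X) q x y A setT
             = \sum_(z in ~: A) \sum_(y : X) q z y (z |: A) setT) &
        \sum_(x : X) \sum_(y : X) q x y setT setT = 1].

End Defs.

(* Main.v *)
Require Import Defs.
From mathcomp Require Import all_boot all_order all_algebra.
From mathcomp Require Import reals.
From mathcomp Require Import zify.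
Set Implicit Arguments. Unset Strict Implicit. Unset Printing Implicit Defensive.
Import Order.TTheory GRing.Theory Num.Theory.

Section Seqs.
Variable X : finType.

Definition key (s : seq X) (x : X) : nat := (index x s * #|X| + enum_rank x)%N.

Lemma key_inj s : injective (key s).
Proof.
move=> x y; rewrite /key => H.
have: (index x s * #|X| + enum_rank x = enum_rank x %[mod #|X|])%N by rewrite modnMDl.
rewrite H modnMDl !modn_small // => E.
by apply: enum_rank_inj; apply: val_inj.
Qed.

Definition ordrel (s : seq X) : {ffun X * X -> bool} :=
  [ffun p : X * X => (key s p.2 < key s p.1)%N].

Lemma ordrel_slo s : is_slo (ordrel s).
Proof.
apply/and3P; split.
- by apply/forallP => x; rewrite ffunE ltnn.
- apply/forallP => x; apply/forallP => y; apply/forallP => z.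
  rewrite !ffunE /=; apply/implyP => H1; apply/implyP => H2.
  exact: ltn_trans H2 H1.
- apply/forallP => x; apply/forallP => y; apply/implyP => nxy.
  rewrite !ffunE /=.
  case: (ltngtP (key s y) (key s x)) => // E.
  by move/key_inj: E => E; rewrite E eqxx in nxy.
Qed.

Definition ordof (s : seq X) : LO X := exist _ (ordrel s) (ordrel_slo s).

Lemma index_inj_in (s : seq X) (x y : X) : x \in s -> y \in s -> index x s = index y s -> x = y.
Proof. by move=> xs ys E; rewrite -(nth_index x xs) E nth_index. Qed.

Lemma lo_ordof s x y : x \in s -> y \in s ->
  lo_rel (ordof s) x y = (index y s < index x s)%N.
Proof.
move=> xs ys; rewrite /lo_rel /= ffunE /= /key.
have ry : (enum_rank y < #|X|)%N := ltn_ord (enum_rank y).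
have rx : (enum_rank x < #|X|)%N := ltn_ord (enum_rank x).
case: (ltngtP (index y s) (index x s)) => E.
- apply/idP; apply: (@leq_trans ((index y s).+1 * #|X|)); first by rewrite mulSn; lia.
  by apply: leq_trans (leq_addr _ _); rewrite leq_mul2r E orbT.
- apply/negbTE; rewrite -leqNgt; apply: ltnW.
  apply: (@leq_trans ((index x s).+1 * #|X|)); first by rewrite mulSn; lia.
  by apply: leq_trans (leq_addr _ _); rewrite leq_mul2r E orbT.
- by have := index_inj_in ys xs E => ->; rewrite ltnn.
Qed.

Fixpoint enums (n : nat) (B : {set X}) : seq (seq X) :=
  if n is n'.+1 then [seq x :: s | x <- enum B, s <- enums n' (B :\ x)]
  else [:: [::]].

Lemma mem_enums n B s :
  (s \in enums n B) = [&& uniq s, size s == n & all (fun z => z \in B) s].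
Proof.
elim: n B s => [|n IH] B s /=.
  case: s => [|a s]; rewrite inE //= andbF //.
apply/allpairsPdep/idP.
- move=> [x [t [xB tE ->]]]; move: tE; rewrite IH => /and3P[ut st at_] /=.
  rewrite mem_enum in xB; rewrite xB ut eqSS st /=.
  have -> : x \notin t.
    by apply/negP => xt; move/allP: at_ => /(_ x xt); rewrite !inE eqxx.
  by apply/allP => z zt; move/allP: at_ => /(_ z zt); rewrite !inE => /andP[].
- case: s => [|x t] //= /and3P[/andP[xt ut] st /andP[xB at_]].
  exists x, t; split => //; first by rewrite mem_enum.
  rewrite eqSS in st; rewrite IH ut st /=; apply/allP => z zt; rewrite !inE (allP at_ z zt) andbT.
  by apply/eqP => E; move: xt; rewrite -E zt.
Qed.

Lemma uniq_enums n B : uniq (enums n B).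
Proof.
elim: n B => [|n IH] B //=.
apply: allpairs_uniq_dep; first exact: enum_uniq.
  by move=> x _; exact: IH.
by move=> [a u] [b v] _ _ /= [-> ->].
Qed.

Lemma enums_mem (n : nat) (B : {set X}) (s : seq X) : #|B| = n -> s \in enums n B -> forall z, (z \in s) = (z \in B).
Proof.
move=> cB; rewrite mem_enums => /and3P[us /eqP ss as_] z.
have sub : {subset s <= B} by move=> w ws; exact: (allP as_ w ws).
have := (@subset_cardP _ (mem s) (mem B)).
rewrite (card_uniqP us) ss cB => /(_ erefl) /(_ (introT subsetP sub)) => E.
exact: E.
Qed.

Lemma enums_all (s : seq X) : s \in enums #|X| setT -> forall x, x \in s.
Proof. by move=> H x; rewrite (enums_mem _ H) ?inE ?cardsT. Qed.

Lemma lo_irr (o : LO X) x : ~~ lo_rel o x x.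
Proof. by case: o => r Hr; rewrite /lo_rel /=; case/and3P: Hr => /forallP H _ _. Qed.

Lemma lo_trans (o : LO X) x y z : lo_rel o x y -> lo_rel o y z -> lo_rel o x z.
Proof.
case: o => r Hr; rewrite /lo_rel /= => H1 H2; case/and3P: Hr => _ /forallP H _.
have /forallP/(_ y)/forallP/(_ z) := H x.
by rewrite H1 H2.
Qed.

Lemma lo_total (o : LO X) x y : x != y -> lo_rel o x y || lo_rel o y x.
Proof.
case: o => r Hr; rewrite /lo_rel /= => nxy; case/and3P: Hr => _ _ /forallP H.
have /forallP/(_ y) := H x.
by rewrite nxy.
Qed.

Lemma LO_ext (o1 o2 : LO X) : (forall x y, lo_rel o1 x y = lo_rel o2 x y) -> o1 = o2.
Proof. by move=> H; apply: val_inj; apply/ffunP => -[x y]; exact: H. Qed.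

Lemma sorted_index (s : seq X) : uniq s -> sorted (fun a b => index a s < index b s)%N s.
Proof.
case: s => [|x0 s'] // us; apply: pairwise_sorted; apply/(pairwiseP x0) => i j.
rewrite !inE => ilt jlt ij; rewrite !index_uniq //.
Qed.

Lemma ordof_surj (o : LO X) : exists2 s, s \in enums #|X| setT & ordof s = o.
Proof.
pose leo := fun a b : X => (a == b) || lo_rel o b a.
have tot : total leo.
  move=> a b; rewrite /leo; case: (eqVneq a b) => [->|nab]; first by rewrite ?eqxx.
  by rewrite /= orbC; apply: lo_total.
have tr : transitive leo.
  move=> b a c; rewrite /leo => /orP[/eqP ->//|H1] /orP[/eqP <-|H2]; first by rewrite H1 orbT.
  by rewrite (lo_trans H2 H1) orbT.
set s := sort leo (enum X).
have ss : sorted leo s by apply: sort_sorted.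
have sin : forall x, x \in s by move=> x; rewrite mem_sort mem_enum.
exists s.
  rewrite mem_enums sort_uniq enum_uniq size_sort -cardE eqxx /=.
  by apply/allP => z _; rewrite inE.
apply: LO_ext => x y; rewrite lo_ordof //.
case: (ltngtP (index y s) (index x s)) => E.
- have := sorted_ltn_index tr ss _ _ (sin y) (sin x) E; rewrite /leo => /orP[/eqP yx|//].
  by rewrite yx ltnn in E.
- have := sorted_ltn_index tr ss _ _ (sin x) (sin y) E; rewrite /leo => /orP[/eqP yx|H].
    by rewrite yx ltnn in E.
  apply/esym/negP => H'; have := lo_trans H H'; by rewrite (negbTE (lo_irr _ _)).
- by have := index_inj_in (sin y) (sin x) E => ->; rewrite (negbTE (lo_irr _ _)).
Qed.

Lemma ordof_inj (s t : seq X) : s \in enums #|X| setT -> t \in enums #|X| setT ->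
  ordof s = ordof t -> s = t.
Proof.
move=> hs ht E.
have us : uniq s by move: hs; rewrite mem_enums => /and3P[].
have ut : uniq t by move: ht; rewrite mem_enums => /and3P[].
have sa := enums_all hs; have ta := enums_all ht.
apply: (@irr_sorted_eq _ (fun a b => index a s < index b s)%N).
- by move=> ???; apply: ltn_trans.
- by move=> ?; rewrite ltnn.
- exact: sorted_index.
- rewrite (@eq_in_sorted _ predT _ (fun a b => index a t < index b t)%N) ?all_predT //.
    exact: sorted_index.
  by move=> a b _ _ /=; rewrite -!lo_ordof // E.
- by move=> z; rewrite sa ta.
Qed.

Lemma rev_enums_perm n B : perm_eq (enums n B) (map (@rev X) (enums n B)).
Proof.
apply: uniq_perm; first exact: uniq_enums.
  rewrite map_inj_uniq ?uniq_enums //; exact: (can_inj (@revK X)).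
move=> s; rewrite -{2}(revK s) mem_map; last exact: (can_inj (@revK X)).
by rewrite !mem_enums rev_uniq size_rev all_rev.
Qed.

Definition Lo (o : LO X) (x : X) : {set X} := [set w | (w == x) || lo_rel o x w].

Lemma Lo_ordof (s : seq X) (x : X) : s \in enums #|X| setT ->
  Lo (ordof s) x = [set w | index w s <= index x s]%N.
Proof.
move=> hs; have sa := enums_all hs.
apply/setP => w; rewrite !inE lo_ordof // [in RHS]leq_eqVlt; congr (_ || _).
by apply/eqP/eqP => [->//|]; apply: index_inj_in.
Qed.

Lemma isMaxE (o : LO X) (A : {set X}) (x : X) : x \in A -> isMax o A x = (A \subset Lo o x).
Proof.
move=> xA; rewrite /isMax xA /inN /=; apply/forall_inP/subsetP.
- by move=> H y yA; rewrite inE; case: eqVneq => //= nyx; apply: (implyP (H y yA)).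
- by move=> H y yA; apply/implyP => nyx; move: (H y yA); rewrite inE (negbTE nyx).
Qed.

Lemma Lo_self (o : LO X) (x : X) : x \in Lo o x.
Proof. by rewrite inE eqxx. Qed.

Lemma argmax_ex (s : seq X) (A : {set X}) : A != set0 ->
  exists2 m, m \in A & forall w, w \in A -> (index w s <= index m s)%N.
Proof.
case/set0Pn => x0 x0A.
case: (arg_maxnP (fun w => index w s) x0A) => m mA H.
by exists m.
Qed.

Lemma argmin_ex (s : seq X) (A : {set X}) : A != set0 ->
  exists2 m, m \in A & forall w, w \in A -> (index m s <= index w s)%N.
Proof.
case/set0Pn => x0 x0A.
case: (arg_minnP (fun w => index w s) x0A) => m mA H.
by exists m.
Qed.

End Seqs.

Section SumsR.
Variables (X : finType) (R : realType).
Local Open Scope ring_scope.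

Lemma big_enumsS (h : seq X -> R) n (B : {set X}) :
  \sum_(s <- enums n.+1 B) h s = \sum_(x in B) \sum_(s <- enums n (B :\ x)) h (x :: s).
Proof. by rewrite /= big_allpairs_dep big_enum. Qed.

Lemma sum_rev (h : seq X -> R) n (B : {set X}) :
  \sum_(s <- enums n B) h s = \sum_(s <- enums n B) h (rev s).
Proof. by rewrite (perm_big _ (rev_enums_perm n B)) big_map. Qed.

Lemma sum_LO (g : LO X -> R) :
  \sum_(o : LO X) g o = \sum_(s <- enums #|X| setT) g (ordof s).
Proof.
rewrite -(big_map (@ordof X) xpredT g); apply: perm_big; apply: uniq_perm.
- exact: index_enum_uniq.
- rewrite map_inj_in_uniq ?uniq_enums //; exact: ordof_inj.
- move=> o; rewrite mem_index_enum; case: (ordof_surj o) => s hs <-.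
  by apply/esym/mapP; exists s.
Qed.

Lemma comb (o : LO X) (B : {set X}) : B != set0 -> B != setT ->
  \sum_(y in B) ((Lo o y == B)%:R : R) = \sum_(z in ~:B) ((Lo o z == z |: B)%:R : R).
Proof.
move=> B0 BT; case: (ordof_surj o) => s hs <-{o}.
have sa := enums_all hs.
have ii : forall a b, index a s = index b s -> a = b by move=> a b; apply: index_inj_in.
under eq_bigr do rewrite Lo_ordof //.
under [in RHS]eq_bigr do rewrite Lo_ordof //.
have CB0 : ~: B != set0.
  by apply: contra BT => /eqP H; rewrite -(setCK B) H setC0.
case: (argmax_ex s B0) => xm xmB Hxm.
case: (argmin_ex s CB0) => zm zmB Hzm.
have zmnB : zm \notin B by rewrite inE in zmB.
rewrite (bigD1 xm) //= big1 ?addr0; last first.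
  move=> y /andP[yB nyx]; case: eqP => // E.
  have : xm \in [set w | (index w s <= index y s)%N] by rewrite E.
  rewrite inE => le1; have le2 := Hxm y yB.
  by rewrite (ii _ _ (anti_leq (introT andP (conj le1 le2)))) eqxx in nyx.
rewrite [RHS](bigD1 zm) //= big1 ?addr0; last first.
  move=> z /andP[zB nzz]; case: eqP => // E.
  have : zm \notin [set w | (index w s <= index z s)%N].
    by rewrite E !inE negb_or zmnB andbT; apply: contra nzz => /eqP ->.
  by rewrite inE Hzm.
suff -> : ([set w | (index w s <= index xm s)%N] == B) =
  ([set w | (index w s <= index zm s)%N] == zm |: B) by [].
apply/eqP/eqP => E.
- have ltxz : (index xm s < index zm s)%N.
    by rewrite ltnNge; apply: contra zmnB => H; rewrite -E inE.
  apply/setP => w; rewrite !inE.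
  case: (eqVneq w zm) => [->|nwz] /=; first by rewrite leqnn.
  apply/idP/idP => [H|].
  + apply: contraT => wnB; have := Hzm w; rewrite inE wnB => /(_ isT) H2.
    by rewrite (ii _ _ (anti_leq (introT andP (conj H H2)))) eqxx in nwz.
  + by rewrite -E inE => H; apply: ltnW; apply: leq_ltn_trans H ltxz.
- have xmz : xm \in [set w | (index w s <= index zm s)%N] by rewrite E !inE xmB orbT.
  rewrite inE in xmz.
  have ltxz : (index xm s < index zm s)%N.
    rewrite ltn_neqAle xmz andbT; apply/eqP => H.
    by move: zmnB; rewrite -(ii _ _ H) xmB.
  apply/setP => w; rewrite inE; apply/idP/idP => [H|wB]; last exact: Hxm.
  have : w \in [set w | (index w s <= index zm s)%N].
    by rewrite inE; apply: ltnW; apply: leq_ltn_trans H ltxz.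
  rewrite E !inE => /orP[/eqP wz|//].
  by move: H; rewrite wz leqNgt ltxz.
Qed.

Lemma top_sum (o : LO X) : (0 < #|X|)%N -> \sum_y ((Lo o y == setT)%:R : R) = 1.
Proof.
move=> X0; case: (ordof_surj o) => s hs <-{o}.
have sa := enums_all hs.
have ii : forall a b, index a s = index b s -> a = b by move=> a b; apply: index_inj_in.
under eq_bigr do rewrite Lo_ordof //.
have T0 : [set: X] != set0 by rewrite -card_gt0 cardsT.
case: (argmax_ex s T0) => ym _ Hym.
rewrite (bigD1 ym) //= big1 ?addr0; last first.
  move=> y nyy; case: eqP => // E.
  have : ym \in [set w | (index w s <= index y s)%N] by rewrite E.
  rewrite inE => le1; have le2 := Hym y (in_setT y).
  by rewrite (ii _ _ (anti_leq (introT andP (conj le1 le2)))) eqxx in nyy.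
suff -> : [set w | (index w s <= index ym s)%N] = setT by rewrite eqxx.
by apply/setP => w; rewrite !inE Hym ?in_setT.
Qed.

Lemma max_ex (o : LO X) (A : {set X}) : A != set0 ->
  exists2 m, isMax o A m & forall x, isMax o A x -> x = m.
Proof.
move=> A0; case: (ordof_surj o) => s hs <-{o}.
have sa := enums_all hs.
have ii : forall a b, index a s = index b s -> a = b by move=> a b; apply: index_inj_in.
case: (argmax_ex s A0) => m mA Hm.
exists m.
  rewrite isMaxE // Lo_ordof //; apply/subsetP => w wA; rewrite inE; exact: Hm.
move=> x xmax; have xA : x \in A by case/andP: xmax.
move: xmax; rewrite isMaxE // Lo_ordof // => /subsetP /(_ m mA); rewrite inE => le1.
by apply: ii; apply: anti_leq; rewrite Hm ?le1.
Qed.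
End SumsR.

Section Chain.
Variables (X : finType) (R : realType).
Local Open Scope ring_scope.
Variable phi : X -> {set X} -> R.
Hypothesis phi_ge0 : forall (y : X) (B : {set X}), y \in B -> 0 <= phi y B.
Hypothesis phi_cons : forall B : {set X}, B != set0 -> B != setT ->
  \sum_(y in B) phi y B = \sum_(z in ~: B) phi z (z |: B).

Definition FF (B : {set X}) : R := \sum_(y in B) phi y B.
Definition cc (y : X) (B : {set X}) : R := phi y B / FF B.
Fixpoint om (D : {set X}) (s : seq X) : R :=
  if s is x :: s' then cc x (x |: D) * om (x |: D) s' else 1.
Definition mu (o : LO X) : R := \prod_(z : X) cc z (Lo o z).
Definition preS (s : seq X) (y : X) : {set X} := [set w in s | (index w s <= index y s)%N].

Lemma FF_ge0 (B : {set X}) : 0 <= FF B.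
Proof. by apply: sumr_ge0 => y yB; apply: phi_ge0. Qed.

Lemma cF (y : X) (S : {set X}) : y \in S -> cc y S * FF S = phi y S.
Proof.
move=> yS; rewrite /cc; have [F0|Fn0] := eqVneq (FF S) 0.
  rewrite F0 mulr0; apply/esym.
  move: F0; rewrite /FF => /psumr_eq0P H; apply: H => // w wS; exact: phi_ge0.
by rewrite divfK.
Qed.

Lemma cc_ge0 (y : X) (S : {set X}) : y \in S -> 0 <= cc y S.
Proof. by move=> yS; rewrite /cc divr_ge0 ?phi_ge0 ?FF_ge0. Qed.

Lemma om_rcons (D : {set X}) (v : seq X) (x : X) : om D (rcons v x) = om D v * cc x (x |: (D :|: [set w in v])).
Proof.
elim: v D => [|a v IH] D /=; first by rewrite mul1r mulr1 setU0.
rewrite IH mulrA; congr (_ * cc x (x |: _)).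
by apply/setP => w; rewrite !inE; case: (w == a); rewrite ?orbT.
Qed.

Lemma preS_cons (x : X) (s : seq X) (y : X) :
  preS (x :: s) y = if x == y then [set y] else x |: preS s y.
Proof.
apply/setP => w; rewrite /preS !inE /=.
case: (eqVneq x y) => [->|nxy]; rewrite !inE.
  case: (eqVneq w y) => [->|nwy]; rewrite ?eqxx //=.
  by rewrite ltn0 andbF.
case: (eqVneq w x) => [->|nwx]; rewrite ?eqxx //=.
Qed.

Lemma prod_om (D : {set X}) (s : seq X) : uniq s -> \prod_(z <- s) cc z (D :|: preS s z) = om D s.
Proof.
elim: s D => [|x s IH] D; first by rewrite big_nil.
rewrite cons_uniq => /andP[xs us]; rewrite big_cons /= -(IH (x |: D) us).
congr (_ * _).
  by rewrite preS_cons eqxx setUC.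
apply: eq_big_seq => z zs; rewrite preS_cons.
have -> : (x == z) = false by apply/negbTE; apply: contra xs => /eqP ->.
by rewrite setUCA setUA.
Qed.

Lemma mu_ordof (s : seq X) : s \in enums #|X| setT -> mu (ordof s) = om set0 s.
Proof.
move=> hs; have sa := enums_all hs.
have us : uniq s by move: hs; rewrite mem_enums => /and3P[].
rewrite /mu -(prod_om set0 us).
rewrite (perm_big s); last first.
  by apply: uniq_perm => //; [exact: index_enum_uniq | move=> z; rewrite mem_index_enum sa].
apply: eq_big_seq => z zs; rewrite Lo_ordof // set0U.
by congr cc; apply/setP => w; rewrite /preS !inE sa.
Qed.

Lemma setCD1 (D : {set X}) (x : X) : ~: D :\ x = ~: (x |: D).
Proof. by apply/setP => w; rewrite !inE negb_or. Qed.

Lemma cardCD1 (D : {set X}) (x : X) : x \in ~: D -> #|~: D| = (#|~: (x |: D)|).+1.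
Proof. by move=> xD; rewrite (cardsD1 x) xD setCD1 add1n. Qed.

Lemma setDD1 (A D : {set X}) (x : X) : (A :\: D) :\ x = A :\: (x |: D).
Proof. by apply/setP => w; rewrite !inE negb_or andbA. Qed.

Lemma U_lem n (D : {set X}) : #|~: D| = n -> D != set0 ->
  FF setT * \sum_(s <- enums n (~: D)) om D s = FF D.
Proof.
elim: n D => [|n IH] D cD D0.
  have CD : ~: D = set0 by apply: cards0_eq.
  have -> : D = setT by rewrite -(setCK D) CD setC0.
  by rewrite big_seq1 /= mulr1.
have DT : D != setT.
  by apply/eqP => E; move: cD; rewrite E setCT cards0.
rewrite big_enumsS mulr_sumr [RHS]/FF phi_cons //.
apply: eq_bigr => x xD; rewrite setCD1.
have cx : #|~: (x |: D)| = n by move: cD; rewrite (cardCD1 xD) => -[].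
rewrite /= -big_distrr /= mulrCA IH //; last by apply/set0Pn; exists x; rewrite setU11.
by rewrite cF // setU11.
Qed.

Definition Zs (y : X) (B D : {set X}) : R :=
  \sum_(s <- enums #|~: D| (~: D)) om D s * ((D :|: preS s y == B)%:R).
Definition Us (D : {set X}) : R := \sum_(s <- enums #|~: D| (~: D)) om D s.

Lemma Zexp (y : X) (B D : {set X}) : y \notin D ->
  Zs y B D = \sum_(x in ~: D) cc x (x |: D) *
     (if x == y then (y |: D == B)%:R * Us (y |: D) else Zs y B (x |: D)).
Proof.
move=> yD; have yCD : y \in ~: D by rewrite inE.
have cm : #|~: D| = (#|~: D|.-1).+1 by rewrite prednK // card_gt0; apply/set0Pn; exists y.
rewrite /Zs {1}cm big_enumsS; apply: eq_bigr => x xD.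
rewrite setCD1; have -> : #|~: D|.-1 = #|~: (x |: D)| by rewrite (cardCD1 xD).
under eq_bigr do rewrite /= preS_cons -mulrA.
rewrite -big_distrr /=; congr (_ * _).
case: (eqVneq x y) => [->|nxy].
  by rewrite /Us -mulr_suml mulrC setUC.
by apply: eq_bigr => s _; rewrite setUCA setUA.
Qed.

Lemma Zs_out (y x : X) (B D : {set X}) : x \notin B -> Zs y B (x |: D) = 0.
Proof.
move=> xB; apply: big1_seq => s _.
suff -> : ((x |: D) :|: preS s y == B) = false by rewrite mulr0.
by apply/negbTE; apply: contra xB => /eqP <-; rewrite !inE eqxx.
Qed.

Lemma Z_lem (y : X) (B : {set X}) : y \in B -> forall k (D : {set X}),
  #|(B :\ y) :\: D| = k -> D \subset B :\ y ->
  FF setT * Zs y B D = (\sum_(v <- enums k ((B :\ y) :\: D)) om D v) * phi y B.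
Proof.
move=> yB k; elim: k => [|k IH] D cS DS.
- have yD : y \notin D by apply/negP => yD; have := subsetP DS y yD; rewrite !inE eqxx.
  have DE : D = B :\ y.
    apply/eqP; rewrite eqEsubset DS /= -setD_eq0; apply/eqP; exact: cards0_eq.
  rewrite big_seq1 /= mul1r Zexp // mulr_sumr (bigD1 y) /=; last by rewrite inE.
  rewrite eqxx big1 ?addr0; last first.
    move=> x /andP[xD nxy]; rewrite (negbTE nxy) Zs_out ?mulr0 //.
    by apply/negP => xB; move: xD; rewrite !inE DE !inE nxy xB.
  have yDB : y |: D = B by rewrite DE setD1K.
  rewrite yDB eqxx mul1r mulrCA /Us U_lem //; first by rewrite cF.
  by apply/set0Pn; exists y.
- have yD : y \notin D by apply/negP => yD; have := subsetP DS y yD; rewrite !inE eqxx.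
  rewrite big_enumsS [RHS]mulr_suml Zexp // [LHS]mulr_sumr.
  rewrite (bigID (fun x => x \in (B :\ y) :\: D)) /=.
  rewrite [X in _ + X]big1 ?addr0; last first.
    move=> x /andP[xD xS]; case: (eqVneq x y) => [exy|nxy].
      rewrite exy ?eqxx.
      suff -> : (y |: D == B) = false by rewrite /= mulr0n mul0r !mulr0.
      apply/negbTE/eqP => E; move: cS; rewrite -E.
      have -> : (y |: D) :\ y = D.
        by apply/setP => w; rewrite !inE; case: eqVneq => // ->; rewrite (negbTE yD).
      by rewrite setDv cards0.
    rewrite Zs_out ?mulr0 //.
    apply/negP => xB; rewrite inE in xD; move: xS; by rewrite !inE nxy xB xD.
  rewrite (eq_bigl (fun x => x \in (B :\ y) :\: D)); last first.
    move=> x; apply/andb_idl => xS; rewrite inE; apply: contra yD => xD.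
    by move: xS; rewrite inE xD.
  apply: eq_bigr => x xS.
  have nxy : x != y by move: xS; rewrite !inE => /andP[_ /andP[]].
  rewrite (negbTE nxy) setDD1 /= -big_distrr /= mulrCA IH ?mulrA //.
    by move: cS; rewrite (cardsD1 x) xS setDD1 add1n => -[].
  by rewrite subUset sub1set DS andbT; move: xS; rewrite inE => /andP[].
Qed.

Lemma Fpos (E : {set X}) (x : X) : x \in E -> E :\ x != set0 -> 0 < phi x E ->
  0 < FF (E :\ x).
Proof.
move=> xE E0 H.
have ET : E :\ x != setT by apply/eqP => Ex; move: (in_setT x); rewrite -Ex !inE eqxx.
rewrite /FF phi_cons // (bigD1 x) /=; last by rewrite !inE eqxx.
rewrite setD1K //; apply: lt_le_trans H _; rewrite lerDl.
by apply: sumr_ge0 => z _; apply: phi_ge0; rewrite setU11.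
Qed.

Lemma W_lem n (E : {set X}) : #|E| = n -> (E = set0 \/ 0 < FF E) ->
  \sum_(v <- enums n E) om set0 v = 1.
Proof.
elim: n E => [|n IH] E cE HE; first by rewrite big_seq1.
have E0 : E != set0 by rewrite -card_gt0 cE.
have FE : 0 < FF E by case: HE => // E0'; rewrite E0' eqxx in E0.
rewrite sum_rev big_enumsS.
have cEx : forall x, x \in E -> #|E :\ x| = n.
  by move=> x xE; move: cE; rewrite (cardsD1 x) xE add1n => -[].
rewrite (eq_bigr (fun x => cc x E)); last first.
  move=> x xE.
  rewrite (eq_big_seq (fun t => om set0 (rev t) * cc x E)); last first.
    move=> t ht; rewrite rev_cons om_rcons set0U.
    have -> : [set w in rev t] = E :\ x.
      by apply/setP => w; rewrite inE mem_rev (enums_mem (cEx x xE) ht).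
    by rewrite setD1K.
  rewrite -mulr_suml -sum_rev.
  have [p0|pn0] := eqVneq (phi x E) 0; first by rewrite /cc p0 !mul0r mulr0.
  rewrite (IH (E :\ x)) ?mul1r ?cEx //.
  have [->|Ex0] := eqVneq (E :\ x) set0; first by left.
  right; apply: Fpos => //; rewrite lt_def pn0 phi_ge0 //.
by rewrite /cc -mulr_suml -/(FF E) divff // gt_eqF.
Qed.

Lemma key_lem (y : X) (B : {set X}) : y \in B ->
  FF setT * \sum_(o : LO X) mu o * (Lo o y == B)%:R = phi y B.
Proof.
move=> yB; rewrite sum_LO.
rewrite (eq_big_seq (fun s => om set0 s * ((set0 :|: preS s y == B)%:R))); last first.
  move=> s hs; rewrite mu_ordof // Lo_ordof // set0U.
  have sa := enums_all hs.
  suff -> : [set w | (index w s <= index y s)%N] = preS s y by [].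
  by apply/setP => w; rewrite /preS !inE sa.
have Z := Z_lem yB (erefl #|(B :\ y) :\: set0|) (sub0set _).
rewrite /Zs setC0 cardsT setD0 in Z; rewrite Z.
have [p0|pn0] := eqVneq (phi y B) 0; first by rewrite p0 mulr0.
rewrite (W_lem (erefl _)) ?mul1r //.
have [->|Ex0] := eqVneq (B :\ y) set0; first by left.
right; apply: Fpos => //; rewrite lt_def pn0 phi_ge0 //.
Qed.
End Chain.


Local Open Scope ring_scope.

Section Gen.
Variables (X : finType) (R : realType).

Definition o0 : LO X := ordof [::].

Lemma sum_Row (F : Row X -> R) : \sum_w F w = \sum_(o : LO X) \sum_(f : {ffun X -> LO X}) F (o, f).
Proof. by rewrite pair_big /=; apply: eq_bigr => -[o f]. Qed.

Lemma sum_ffun_prod (nu : X -> LO X -> R) (g : LO X -> R) (x : X) :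
  (forall z, z != x -> \sum_o nu z o = 1) ->
  \sum_(f : {ffun X -> LO X}) (\prod_z nu z (f z)) * g (f x) = \sum_o nu x o * g o.
Proof.
move=> H.
pose G z o := if z == x then nu z o * g o else nu z o.
transitivity (\sum_(f : {ffun X -> LO X}) \prod_z G z (f z)).
  apply: eq_bigr => f _; rewrite (bigD1 x) //= [RHS](bigD1 x) //= /G eqxx mulrAC.
  congr (_ * _); apply: eq_bigr => z /negbTE ->; by [].
rewrite -bigA_distr_bigA (bigD1 x) //= [X in _ * X]big1 ?mulr1 /G.
  by apply: eq_bigr => o _; rewrite eqxx.
by move=> z nzx; rewrite (negbTE nzx) H.
Qed.

Lemma sum_sup (L A : {set X}) :
  \sum_(A' : {set X} | A \subset A') ((L == A')%:R : R) = (A \subset L)%:R.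
Proof.
rewrite big_mkcond (bigD1 L) //= eqxx big1 ?addr0; first by case: ifP.
by move=> A' nA'; rewrite eq_sym (negbTE nA'); case: ifP.
Qed.

Lemma Eentry_E (w : Row X) x y (A B : {set X}) : x \in A -> y \in B ->
  Eentry R w x y A B = (A \subset Lo w.1 x)%:R * (B \subset Lo (w.2 x) y)%:R.
Proof.
move=> xA yB; rewrite /Eentry !isMaxE //.
by case: (A \subset _); case: (B \subset _); rewrite ?mulr1 ?mul0r ?mulr0.
Qed.

Lemma E_sum (w : Row X) (A B : {set X}) : A != set0 -> B != set0 ->
  \sum_(x in A) \sum_(y in B) Eentry R w x y A B = 1.
Proof.
move=> A0 B0; case: (max_ex w.1 A0) => m mmax muniq.
have mA : m \in A by case/andP: mmax.
rewrite (bigD1 m) //= [X in _ + X]big1 ?addr0; last first.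
  move=> x /andP[xA nxm]; apply: big1 => y _; rewrite /Eentry.
  case: ifP => // /andP[H _].
  by rewrite (muniq x H) eqxx in nxm.
case: (max_ex (w.2 m) B0) => m' m'max m'uniq.
have m'B : m' \in B by case/andP: m'max.
rewrite (bigD1 m') //= [X in _ + X]big1 ?addr0; last first.
  move=> y /andP[yB nym]; rewrite /Eentry.
  case: ifP => // /andP[_ H].
  by rewrite (m'uniq y H) eqxx in nym.
by rewrite /Eentry mmax m'max.
Qed.

Lemma sum3_swap (I J : finType) (P : pred I) (Q : pred J) (F : I -> J -> Row X -> R) :
  \sum_(i | P i) \sum_(j | Q j) \sum_w F i j w = \sum_w \sum_(i | P i) \sum_(j | Q j) F i j w.
Proof. by under eq_bigr do rewrite exchange_big; exact: exchange_big. Qed.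

Lemma mu_ge0 (phi : X -> {set X} -> R) :
  (forall y (B : {set X}), y \in B -> 0 <= phi y B) -> forall o, 0 <= mu phi o.
Proof. by move=> H o; apply: prodr_ge0 => z _; apply: cc_ge0 => //; apply: Lo_self. Qed.

Lemma mu_sum1 (phi : X -> {set X} -> R)
  (phi_ge0 : forall y (B : {set X}), y \in B -> 0 <= phi y B)
  (phi_cons : forall B : {set X}, B != set0 -> B != setT ->
     \sum_(y in B) phi y B = \sum_(z in ~: B) phi z (z |: B)) :
  (0 < #|X|)%N -> FF phi setT != 0 -> \sum_o mu phi o = 1.
Proof.
move=> X0 Fn0.
have E : FF phi setT * \sum_o mu phi o = FF phi setT * 1.
  transitivity (\sum_o \sum_y FF phi setT * (mu phi o * ((Lo o y == setT)%:R : R))).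
    rewrite mulr_sumr; apply: eq_bigr => o _.
    by rewrite -mulr_sumr -mulr_sumr (top_sum _ _ X0) mulr1.
  rewrite exchange_big mulr1 [RHS]/FF; apply: eq_big => [y|y _]; first by rewrite in_setT.
  by rewrite -mulr_sumr key_lem.
exact: (mulfI Fn0 E).
Qed.
End Gen.

Section Main.
Variables (X : finType) (R : realType).
Variable Xlim : {set {set X} * {set X}}.
Variable p : X -> X -> {set X} -> {set X} -> R.

Definition ind (b : bool) : R := if b then 1 else 0.

Lemma EentryI (w : Row X) x y (A B : {set X}) : x \in A -> y \in B ->
  Eentry R w x y A B = ind (inN w.1 x A) * ind (inN (w.2 x) y B).
Proof.
move=> xA yB; rewrite /Eentry /isMax xA yB /ind /=.
by case: (inN _ _ _); case: (inN _ _ _); rewrite ?mulr1 ?mulr0.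
Qed.

Lemma cdru_rE : CDRU_rep Xlim p -> rE_rep Xlim p.
Proof.
case=> nu [t [nu0 nu1 t0 t1 rep]].
exists (fun w : Row X => nu w.1 * \prod_z t z w.1 (w.2 z)); split.
  by move=> w; apply: mulr_ge0 => //; apply: prodr_ge0 => z _; exact: t0.
move=> A B x y AB xA yB; rewrite rep // sum_Row [RHS]big_mkcond /=; apply: eq_bigr => o _.
rewrite (eq_bigr (fun f : {ffun X -> LO X} =>
   nu o * ind (inN o x A) * ((\prod_z t z o (f z)) * ind (inN (f x) y B)))); last first.
  by move=> f _; rewrite EentryI //= mulrACA.
rewrite -mulr_sumr (@sum_ffun_prod _ _ (fun z => t z o) (fun o' => ind (inN o' y B)) x) // /ind; case: (inN o x A); last by rewrite mulr0 mul0r.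
rewrite mulr1 [RHS]big_mkcond [LHS]mulr_sumr /=; apply: eq_bigr => o' _.
by case: (inN o' y B); rewrite ?mulr1 ?mulr0.
Qed.

Lemma sum_ind1 (T : finType) (t0 : T) : \sum_(t : T) (if t == t0 then 1 else 0 : R) = 1.
Proof. by rewrite -big_mkcond big_pred1_eq. Qed.

Lemma rE_norm : observed_RJCR Xlim p -> rE_rep Xlim p ->
  exists r : Row X -> R, [/\ forall w, 0 <= r w, \sum_w r w = 1 &
    forall A B x y, (A, B) \in Xlim -> x \in A -> y \in B ->
       \sum_w r w * Eentry R w x y A B = p x y A B].
Proof.
case=> Hne [Hp0 Hp1] [r [r0 rE]].
have [XL0|XLn0] := eqVneq Xlim set0.
  pose w0 : Row X := (o0 X, [ffun=> o0 X]).
  exists (fun w => if w == w0 then 1 else 0); split.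
  - by move=> w; case: ifP.
  - exact: sum_ind1.
  - by move=> A B x y; rewrite XL0 inE.
exists r; split => //.
case/set0Pn: XLn0 => -[A B] AB; have [A0 B0] := Hne A B AB.
rewrite -(Hp1 A B AB).
transitivity (\sum_(x in A) \sum_(y in B) \sum_w r w * Eentry R w x y A B); last first.
  by apply: eq_bigr => x xA; apply: eq_bigr => y yB; rewrite rE.
rewrite sum3_swap; apply: eq_bigr => w _.
transitivity (r w * \sum_(x in A) \sum_(y in B) Eentry R w x y A B); first by rewrite (E_sum R w A0 B0) mulr1.
by rewrite mulr_sumr; apply: eq_bigr => x _; rewrite mulr_sumr.
Qed.

Lemma rE_cdru : observed_RJCR Xlim p -> rE_rep Xlim p -> CDRU_rep Xlim p.
Proof.
move=> obs /(rE_norm obs) [r [r0 r1 rE]].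
pose nu (o : LO X) := \sum_(f : {ffun X -> LO X}) r (o, f).
pose t (x : X) (o o' : LO X) := if nu o == 0 then (if o' == o0 X then 1 else 0)
   else (\sum_(f : {ffun X -> LO X} | f x == o') r (o, f)) / nu o.
have part : forall x o, \sum_o' \sum_(f : {ffun X -> LO X} | f x == o') r (o, f) = nu o.
  move=> x o; rewrite /nu (partition_big (fun f : {ffun X -> LO X} => f x) xpredT) //.
have nut : forall x o o', nu o * t x o o' = \sum_(f : {ffun X -> LO X} | f x == o') r (o, f).
  move=> x o o'; rewrite /t; have [n0|nn0] := eqVneq (nu o) 0.
    rewrite n0 mul0r; apply/esym; apply: big1 => f _.
    move: n0; rewrite /nu => /psumr_eq0P; apply => // g _; exact: r0.
  by rewrite mulrC divfK.
exists nu, t; split.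
- by move=> o; apply: sumr_ge0 => f _; exact: r0.
- by rewrite /nu -sum_Row.
- move=> x o o'; rewrite /t; case: ifP => _; first by case: ifP.
  by apply: divr_ge0; apply: sumr_ge0 => f _; exact: r0.
- move=> x o; rewrite /t; have [n0|nn0] := eqVneq (nu o) 0; first exact: sum_ind1.
  by rewrite -mulr_suml part divff.
- move=> A B x y AB xA yB; rewrite -rE // sum_Row [RHS]big_mkcond /=.
  apply: eq_bigr => o _.
  rewrite (eq_bigr (fun f : {ffun X -> LO X} => ind (inN o x A) * (r (o, f) * ind (inN (f x) y B))));
    last by move=> f _; rewrite EentryI //= mulrCA.
  rewrite -mulr_sumr /ind; case: (inN o x A); last by rewrite mul0r.
  rewrite mul1r (partition_big (fun f : {ffun X -> LO X} => f x) xpredT) //= [RHS]big_mkcond /=.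
  apply: eq_bigr => o' _.
  rewrite (eq_bigr (fun f : {ffun X -> LO X} => r (o, f) * ind (inN o' y B))); last first.
    by move=> f /eqP ->.
  rewrite -mulr_suml /ind; case: (inN o' y B); last by rewrite mulr0.
  by rewrite mulr1 nut.
Qed.

Lemma rE_q : (0 < #|X|)%N -> observed_RJCR Xlim p -> rE_rep Xlim p -> q_rep Xlim p.
Proof.
move=> X0 obs /(rE_norm obs) [r [r0 r1 rE]].
pose q (x y : X) (A B : {set X}) : R :=
  \sum_w r w * ((Lo w.1 x == A)%:R * (Lo (w.2 x) y == B)%:R).
have H : forall (P : pred X) (G : X -> {set X}) w,
    \sum_(x | P x) \sum_y r w * ((Lo w.1 x == G x)%:R * (Lo (w.2 x) y == setT)%:R)
    = r w * \sum_(x | P x) ((Lo w.1 x == G x)%:R : R).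
  move=> P G w; rewrite mulr_sumr; apply: eq_bigr => x _.
  by rewrite -mulr_sumr -mulr_sumr (top_sum _ _ X0) mulr1.
exists q; split.
- move=> A B x y AB xA yB; rewrite -rE // sum3_swap; apply: eq_bigr => w _.
  rewrite Eentry_E // -(sum_sup R (Lo w.1 x) A) -(sum_sup R (Lo (w.2 x) y) B).
  rewrite mulr_suml mulr_sumr; apply: eq_bigr => A' _.
  by rewrite mulr_sumr mulr_sumr.
- move=> A B x A0 B0 BT xA; rewrite /q [LHS]exchange_big [RHS]exchange_big /=.
  apply: eq_bigr => w _; under eq_bigr do rewrite mulrA; under [RHS]eq_bigr do rewrite mulrA.
  rewrite -!mulr_sumr; congr (_ * _); exact: comb.
- move=> A B x y _ _ _ _; apply: sumr_ge0 => w _.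
  by apply: mulr_ge0 => //; apply: mulr_ge0; apply: ler0n.
- move=> A A0 AT; rewrite /q sum3_swap [RHS]sum3_swap; apply: eq_bigr => w _.
  rewrite (H (mem A) (fun=> A)) (H (mem (~: A)) (fun z => z |: A)).
  by congr (_ * _); exact: comb.
- rewrite /q sum3_swap -[RHS]r1; apply: eq_bigr => w _.
  by rewrite (H xpredT (fun=> setT)) (top_sum _ _ X0) mulr1.
Qed.

Lemma q_rE : (0 < #|X|)%N -> q_rep Xlim p -> rE_rep Xlim p.
Proof.
move=> X0 [q [qa qb qc qd qe]].
have T0 : [set: X] != set0 by rewrite -card_gt0 cardsT.
have ne0 : forall (y : X) (B : {set X}), y \in B -> B != set0.
  by move=> y B yB; apply/set0Pn; exists y.
pose phi1 (x : X) (A : {set X}) : R := \sum_y q x y A setT.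
have p1_ge0 : forall y (B : {set X}), y \in B -> 0 <= phi1 y B.
  move=> y B yB; apply: sumr_ge0 => z _.
  exact: (qc B setT y z (ne0 _ _ yB) T0 yB (in_setT z)).
have p1_cons : forall B : {set X}, B != set0 -> B != setT ->
    \sum_(y in B) phi1 y B = \sum_(z in ~: B) phi1 z (z |: B) by exact: qd.
have F1 : FF phi1 setT = 1.
  by rewrite /FF -qe; apply: eq_big => [y|y _] //; rewrite in_setT.
pose phi2 (x : X) (A : {set X}) (y : X) (B : {set X}) : R := q x y A B.
have p2_ge0 : forall x (A : {set X}), x \in A -> forall y (B : {set X}), y \in B ->
    0 <= phi2 x A y B.
  by move=> x A xA y B yB; exact: (qc A B x y (ne0 _ _ xA) (ne0 _ _ yB) xA yB).
have p2_cons : forall x (A : {set X}), x \in A -> forall B : {set X}, B != set0 -> B != setT ->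
    \sum_(y in B) phi2 x A y B = \sum_(z in ~: B) phi2 x A z (z |: B).
  by move=> x A xA B B0 BT; exact: (qb A B x (ne0 _ _ xA) B0 BT xA).
have F2 : forall x A, FF (phi2 x A) setT = phi1 x A.
  by move=> x A; rewrite /FF; apply: eq_bigl => y; rewrite in_setT.
pose nu2 (x : X) (A : {set X}) (o' : LO X) : R :=
  if phi1 x A == 0 then (if o' == o0 X then 1 else 0) else mu (phi2 x A) o'.
have nu2_sum : forall x (A : {set X}), x \in A -> \sum_o' nu2 x A o' = 1.
  move=> x A xA; rewrite /nu2; case: eqP => [_|H]; first exact: sum_ind1.
  by apply: (mu_sum1 (p2_ge0 x A xA) (p2_cons x A xA) X0); rewrite F2; apply/eqP.
have nu2_ge0 : forall x (A : {set X}) o', x \in A -> 0 <= nu2 x A o'.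
  move=> x A o' xA; rewrite /nu2; case: ifP => _; first by case: ifP.
  exact: (mu_ge0 (p2_ge0 x A xA)).
pose r (w : Row X) : R := mu phi1 w.1 * \prod_z nu2 z (Lo w.1 z) (w.2 z).
exists r; split.
  move=> w; apply: mulr_ge0; first exact: (mu_ge0 p1_ge0).
  by apply: prodr_ge0 => z _; apply: nu2_ge0; apply: Lo_self.
move=> A B x y AB xA yB; rewrite -qa // sum_Row.
pose G (L : {set X}) := \sum_o' nu2 x L o' * ((B \subset Lo o' y)%:R : R).
transitivity (\sum_o mu phi1 o * ((A \subset Lo o x)%:R : R) * G (Lo o x)).
  apply: eq_bigr => o _.
  rewrite (eq_bigr (fun f : {ffun X -> LO X} => mu phi1 o * ((A \subset Lo o x)%:R : R) *
     ((\prod_z nu2 z (Lo o z) (f z)) * (B \subset Lo (f x) y)%:R))); last first.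
    by move=> f _; rewrite Eentry_E //= /r /= mulrACA.
  rewrite -mulr_sumr (@sum_ffun_prod _ _ (fun z => nu2 z (Lo o z))
     (fun o' => ((B \subset Lo o' y)%:R : R)) x) //.
  by move=> z _; apply: nu2_sum; apply: Lo_self.
transitivity (\sum_o \sum_(A' : {set X} | A \subset A')
    mu phi1 o * ((Lo o x == A')%:R : R) * G A').
  apply: eq_bigr => o _.
  rewrite -(sum_sup R (Lo o x) A) -mulrA mulr_suml mulr_sumr; apply: eq_bigr => A' _.
  by case: (eqVneq (Lo o x) A') => [->|ne]; rewrite /= ?mulrA ?mulr0n ?mulr0 ?mul0r.
rewrite exchange_big; apply: eq_bigr => A' AA'.
have xA' : x \in A' := subsetP AA' x xA.
rewrite -mulr_suml.
have K1 := key_lem p1_ge0 p1_cons xA'; rewrite F1 mul1r in K1; rewrite K1 /G.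
have [z0|nz0] := eqVneq (phi1 x A') 0.
  rewrite z0 mul0r; apply/esym; apply: big1 => B' BB'.
  have yB' := subsetP BB' y yB.
  have K2 := key_lem (p2_ge0 x A' xA') (p2_cons x A' xA') yB'.
  by rewrite F2 z0 mul0r in K2; exact: (esym K2).
rewrite /nu2 (negbTE nz0).
under eq_bigr => o' _ do rewrite -(sum_sup R (Lo o' y) B) mulr_sumr.
rewrite exchange_big mulr_sumr; apply: eq_bigr => B' BB'.
have yB' := subsetP BB' y yB.
by rewrite -(F2 x A') (key_lem (p2_ge0 x A' xA') (p2_cons x A' xA') yB').
Qed.
End Main.

Unset Implicit Arguments.
Local Close Scope ring_scope.

Theorem theorem7 (X : finType) (R : realType)
    (Xlim : {set {set X} * {set X}})
    (p : X -> X -> {set X} -> {set X} -> R) :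
  (0 < #|X|)%N ->
  observed_RJCR Xlim p ->
  (CDRU_rep Xlim p <-> rE_rep Xlim p) /\ (rE_rep Xlim p <-> q_rep Xlim p).
Proof.
move=> X0 obs; split; split.
- exact: cdru_rE.
- exact: rE_cdru obs.
- exact: rE_q X0 obs.
- exact: q_rE X0.
Qed.
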